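(* Let $R$ be a spherical polygon contained in the interior of a hemisphere of the unit sphere, and let $\mathcal D$ be a Spherical Diagram. Let $x$ be a point of the union of the arcs of $\mathcal D$ lying in the interior of $R$. Then for every great circle $\gamma$ through $x$ there are arcs of $\mathcal D$ that thrust the boundary of $R$ at two distinct points $y$ and $z$, where $y$ and $z$ lie in the two different closed hemispheres bounded by $\gamma$ (i.e., on opposite sides of $\gamma$ or on $\gamma$), and both $y$ and $z$ are internally $R$-connected (with respect to $\mathcal D$) with $x$.
   Context: A geodesic arc on the unit sphere in $\mathbb R^3$ is the unique shortest curve joining two non-antipodal points. An arc $a$ blocks an arc $b$ (equivalently, $b$ hits $a$) if an endpoint of $b$ lies in the relative interior of $a$. A Spherical Diagram (SD) is a finite non-empty collection $\mathcal D$ of pairwise interior-disjoint geodesic arcs on the unit sphere such that each arc of $\mathcal D$ is blocked by arcs of $\mathcal D$ at each of its endpoints. For a spherical polygon $R$ contained in the interior of a hemisphere, an arc $a$ thrusts the boundary of $R$ at a point $y$ if $y\in a\cap\partial R$ and $a$ also intersects the interior of $R$. Two points are internally $R$-connected (with respect to $\mathcal D$) if there is a path between them contained in the union of the arcs of $\mathcal D$, all of whose points except possibly its endpoints lie in the interior of $R$. *)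

(* Defs.v *)
From Stdlib Require Import Reals Lra List.
Import ListNotations.
Open Scope R_scope.

Record pt := Pt { px : R; py : R; pz : R }.

Definition origin : pt := Pt 0 0 0.
Definition dot (p q : pt) : R := px p * px q + py p * py q + pz p * pz q.
Definition padd (p q : pt) : pt := Pt (px p + px q) (py p + py q) (pz p + pz q).
Definition pscale (c : R) (p : pt) : pt := Pt (c * px p) (c * py p) (c * pz p).
Definition psub (p q : pt) : pt := padd p (pscale (-1) q).
Definition pnorm (p : pt) : R := sqrt (dot p p).
Definition dist (p q : pt) : R := pnorm (psub p q).

Definition on_sphere (p : pt) : Prop := dot p p = 1.
Definition normalize (p : pt) : pt := pscale (/ pnorm p) p.

Record arc := Arc { src : pt; dst : pt }.

Definition valid_arc (g : arc) : Prop :=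
  on_sphere (src g) /\ on_sphere (dst g) /\ src g <> dst g /\
  dst g <> pscale (-1) (src g).

(* the minor great-circle arc = radial projection of the chord *)
Definition arc_pt (g : arc) (t : R) : pt :=
  normalize (padd (pscale (1 - t) (src g)) (pscale t (dst g))).

Definition on_arc (g : arc) (p : pt) : Prop :=
  exists t, 0 <= t <= 1 /\ p = arc_pt g t.

Definition in_relint (g : arc) (p : pt) : Prop :=
  exists t, 0 < t < 1 /\ p = arc_pt g t.

Definition blocks (a b : arc) : Prop :=
  in_relint a (src b) \/ in_relint a (dst b).

Definition SD (D : list arc) : Prop :=
  D <> [] /\
  (forall g, In g D -> valid_arc g) /\
  (forall i j g h, i <> j -> nth_error D i = Some g -> nth_error D j = Some h ->
     forall p, in_relint g p -> in_relint h p -> False) /\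
  (forall g, In g D ->
     (exists c, In c D /\ in_relint c (src g)) /\
     (exists c, In c D /\ in_relint c (dst g))).

Definition on_D (D : list arc) (p : pt) : Prop := exists g, In g D /\ on_arc g p.

Definition in_interior (S : pt -> Prop) (p : pt) : Prop :=
  on_sphere p /\ S p /\
  exists e, 0 < e /\ forall q, on_sphere q -> dist p q < e -> S q.

Definition in_closure (S : pt -> Prop) (p : pt) : Prop :=
  on_sphere p /\ forall e, 0 < e -> exists q, S q /\ dist p q < e.

Definition in_boundary (S : pt -> Prop) (p : pt) : Prop :=
  in_closure S p /\ ~ in_interior S p.

Definition poly_edge (vs : list pt) (i : nat) : arc :=
  Arc (nth i vs origin) (nth (S i mod length vs) vs origin).

Definition simple_polygon (vs : list pt) : Prop :=
  (3 <= length vs)%nat /\ NoDup vs /\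
  (forall i, (i < length vs)%nat -> valid_arc (poly_edge vs i)) /\
  (forall i j p, (i < length vs)%nat -> (j < length vs)%nat -> i <> j ->
     on_arc (poly_edge vs i) p -> on_arc (poly_edge vs j) p ->
     (p = src (poly_edge vs i) \/ p = dst (poly_edge vs i)) /\
     (p = src (poly_edge vs j) \/ p = dst (poly_edge vs j))).

Definition polygon_curve (vs : list pt) (p : pt) : Prop :=
  exists i, (i < length vs)%nat /\ on_arc (poly_edge vs i) p.

Definition spherical_polygon (Rg : pt -> Prop) : Prop :=
  (forall p, Rg p -> on_sphere p) /\
  (forall p, in_closure Rg p -> Rg p) /\
  (forall p, Rg p -> in_closure (in_interior Rg) p) /\
  exists vs, simple_polygon vs /\
    forall p, in_boundary Rg p <-> polygon_curve vs p.

Definition in_open_hemisphere (Rg : pt -> Prop) : Prop :=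
  exists h, on_sphere h /\ forall p, Rg p -> 0 < dot h p.

Definition thrusts (g : arc) (Rg : pt -> Prop) (y : pt) : Prop :=
  on_arc g y /\ in_boundary Rg y /\ exists q, on_arc g q /\ in_interior Rg q.

Definition int_connected (D : list arc) (Rg : pt -> Prop) (x y : pt) : Prop :=
  exists f : R -> pt,
    f 0 = x /\ f 1 = y /\
    (forall t, 0 <= t <= 1 -> on_D D (f t)) /\
    (forall t, 0 < t < 1 -> in_interior Rg (f t)) /\
    (forall t, 0 <= t <= 1 -> forall e, 0 < e -> exists d, 0 < d /\
       forall s, 0 <= s <= 1 -> Rabs (s - t) < d -> dist (f s) (f t) < e).

(* Main.v *)
Require Import Defs.
From Stdlib Require Import Reals Lra Lia List Classical ClassicalEpsilon.
Require Import Defs.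
Open Scope R_scope.

Lemma pt_eq p q : px p = px q -> py p = py q -> pz p = pz q -> p = q.
Proof. destruct p, q; simpl; intros; subst; reflexivity. Qed.

Lemma dot_self_nonneg p : 0 <= dot p p.
Proof. unfold dot; nra. Qed.

Lemma dot_self_zero p : dot p p = 0 -> px p = 0 /\ py p = 0 /\ pz p = 0.
Proof. unfold dot; intros; repeat split; nra. Qed.

Definition cpt (g:arc) t := padd (pscale (1-t) (src g)) (pscale t (dst g)).

Lemma arc_pt_eq g t : arc_pt g t = pscale (/ sqrt (dot (cpt g t) (cpt g t))) (cpt g t).
Proof. reflexivity. Qed.

Lemma dot_gt_m1 a b : on_sphere a -> on_sphere b -> b <> pscale (-1) a -> -1 < dot a b.
Proof.
  unfold on_sphere; intros Ha Hb Hne.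
  destruct (Rlt_or_le (-1) (dot a b)) as [H|H]; auto.
  exfalso; apply Hne.
  assert (E: dot (padd a b) (padd a b) = 0).
  { apply Rle_antisym; [|apply dot_self_nonneg].
    replace (dot (padd a b) (padd a b)) with (dot a a + dot b b + 2 * dot a b)
      by (unfold dot, padd; simpl; ring). lra. }
  apply dot_self_zero in E; simpl in E; destruct E as (E1&E2&E3).
  apply pt_eq; simpl; lra.
Qed.

Lemma cpt_pos g t : valid_arc g -> 0 <= t <= 1 -> 0 < dot (cpt g t) (cpt g t).
Proof.
  intros (Ha&Hb&Hne&Hanti) Ht.
  pose proof (dot_gt_m1 _ _ Ha Hb Hanti) as K.
  unfold on_sphere in *.
  replace (dot (cpt g t) (cpt g t)) with
    ((1-t)*(1-t)*dot (src g) (src g) + t*t*dot (dst g) (dst g) + 2*t*(1-t)*dot (src g) (dst g))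
    by (unfold cpt, dot, padd, pscale; simpl; ring).
  rewrite Ha, Hb.
  assert (0 <= t*(1-t)) by nra.
  destruct (Req_dec t (1/2)).
  - subst; nra.
  - assert (0 < (1-2*t)*(1-2*t)). { assert (1-2*t <> 0) by lra. nra. }
    nra.
Qed.
Lemma cmul f g t : continuity_pt f t -> continuity_pt g t -> continuity_pt (fun s => f s * g s) t.
Proof. intros; exact (continuity_pt_mult f g t H H0). Qed.
Lemma cplus f g t : continuity_pt f t -> continuity_pt g t -> continuity_pt (fun s => f s + g s) t.
Proof. intros; exact (continuity_pt_plus f g t H H0). Qed.
Lemma cinv f t : continuity_pt f t -> f t <> 0 -> continuity_pt (fun s => / f s) t.
Proof. intros; exact (continuity_pt_inv f t H H0). Qed.
Lemma cconst c t : continuity_pt (fun _ => c) t.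
Proof. apply continuity_pt_const; intros x y; reflexivity. Qed.
Lemma cid t : continuity_pt (fun s => s) t.
Proof. apply derivable_continuous_pt, derivable_pt_id. Qed.
Lemma csqrt f t : continuity_pt f t -> 0 <= f t -> continuity_pt (fun s => sqrt (f s)) t.
Proof. intros; exact (continuity_pt_comp f sqrt t H (continuity_pt_sqrt _ H0)). Qed.
Lemma ccomp f g t : continuity_pt f t -> continuity_pt g (f t) -> continuity_pt (fun s => g (f s)) t.
Proof. intros; exact (continuity_pt_comp f g t H H0). Qed.
Lemma cont_eps f t : continuity_pt f t -> forall e, 0 < e -> exists d, 0 < d /\ forall s, Rabs (s - t) < d -> Rabs (f s - f t) < e.
Proof.
  intros H e He. destruct (H e He) as (d&Hd&Hs). exists d; split; auto.
  intros s Hst. destruct (Req_dec s t).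
  - subst. rewrite Rminus_diag, Rabs_R0; auto.
  - apply (Hs s). split. split; auto. exact I. auto.
Qed.
Lemma cminus f g t : continuity_pt f t -> continuity_pt g t -> continuity_pt (fun s => f s - g s) t.
Proof. intros; exact (continuity_pt_minus f g t H H0). Qed.
Lemma copp f t : continuity_pt f t -> continuity_pt (fun s => - f s) t.
Proof. intros; exact (continuity_pt_opp f t H). Qed.
Lemma copp_id t : continuity_pt Ropp t.
Proof. exact (copp (fun s => s) t (cid t)). Qed.
Ltac cnt := repeat first [apply cplus | apply cmul | apply cminus | apply copp | apply copp_id | apply cid | apply cconst].

Definition cont (f : R -> pt) t :=
  continuity_pt (fun s => px (f s)) t /\ continuity_pt (fun s => py (f s)) t /\
  continuity_pt (fun s => pz (f s)) t.

Lemma cpt_cont g t : cont (cpt g) t.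
Proof.
  unfold cont, cpt, padd, pscale; simpl; repeat split; cnt.
Qed.

Lemma arc_cont g t : valid_arc g -> 0 <= t <= 1 -> cont (arc_pt g) t.
Proof.
  intros Hv Ht. pose proof (cpt_pos g t Hv Ht) as P.
  destruct (cpt_cont g t) as (C1&C2&C3).
  assert (Cd : continuity_pt (fun s => dot (cpt g s) (cpt g s)) t).
  { unfold dot; cnt; auto. }
  assert (Ci : continuity_pt (fun s => / sqrt (dot (cpt g s) (cpt g s))) t).
  { apply cinv. apply csqrt; auto; lra. apply Rgt_not_eq, sqrt_lt_R0; auto. }
  unfold cont; repeat split;
  [ change (continuity_pt (fun s => / sqrt (dot (cpt g s) (cpt g s)) * px (cpt g s)) t)
  | change (continuity_pt (fun s => / sqrt (dot (cpt g s) (cpt g s)) * py (cpt g s)) t)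
  | change (continuity_pt (fun s => / sqrt (dot (cpt g s) (cpt g s)) * pz (cpt g s)) t)];
  apply cmul; auto.
Qed.

Lemma arc_sphere g t : valid_arc g -> 0 <= t <= 1 -> on_sphere (arc_pt g t).
Proof.
  intros Hv Ht. pose proof (cpt_pos g t Hv Ht) as P.
  unfold on_sphere. rewrite arc_pt_eq.
  set (c := cpt g t) in *.
  replace (dot (pscale (/ sqrt (dot c c)) c) (pscale (/ sqrt (dot c c)) c))
    with (/ sqrt (dot c c) * / sqrt (dot c c) * dot c c) by (unfold dot, pscale; simpl; ring).
  rewrite <- Rinv_mult, sqrt_sqrt by lra. field. lra.
Qed.

Lemma normalize_unit a : on_sphere a -> pscale (/ sqrt (dot a a)) a = a.
Proof.
  unfold on_sphere; intros H; rewrite H, sqrt_1, Rinv_1.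
  apply pt_eq; unfold pscale; simpl; ring.
Qed.

Lemma arc_pt_0 g : on_sphere (src g) -> arc_pt g 0 = src g.
Proof.
  intros H. rewrite arc_pt_eq.
  replace (cpt g 0) with (src g) by (apply pt_eq; unfold cpt, padd, pscale; simpl; ring).
  apply normalize_unit; auto.
Qed.

Lemma arc_pt_1 g : on_sphere (dst g) -> arc_pt g 1 = dst g.
Proof.
  intros H. rewrite arc_pt_eq.
  replace (cpt g 1) with (dst g) by (apply pt_eq; unfold cpt, padd, pscale; simpl; ring).
  apply normalize_unit; auto.
Qed.

Definition rev (g : arc) := Arc (dst g) (src g).

Lemma arc_pt_rev g t : arc_pt (rev g) t = arc_pt g (1 - t).
Proof.
  rewrite !arc_pt_eq.
  replace (cpt (rev g) t) with (cpt g (1 - t)) by (apply pt_eq; unfold cpt, padd, pscale, rev; simpl; ring).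
  reflexivity.
Qed.

Lemma on_arc_rev g p : on_arc (rev g) p -> on_arc g p.
Proof.
  intros (t&Ht&->). exists (1 - t); split; [lra|]. apply arc_pt_rev.
Qed.

Lemma on_arc_rev' g p : on_arc g p -> on_arc (rev g) p.
Proof.
  intros (t&Ht&->). exists (1 - t); split; [lra|]. rewrite arc_pt_rev. f_equal; ring.
Qed.

Lemma relint_rev' g p : in_relint g p -> in_relint (rev g) p.
Proof.
  intros (t&Ht&->). exists (1 - t); split; [lra|]. rewrite arc_pt_rev. f_equal; ring.
Qed.

Lemma rev_rev g : rev (rev g) = g.
Proof. destruct g; reflexivity. Qed.

Lemma valid_rev g : valid_arc g -> valid_arc (rev g).
Proof.
  unfold valid_arc, rev; simpl. intros (H1&H2&H3&H4). repeat split; auto.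
  intro E; apply H4. rewrite E. apply pt_eq; unfold pscale; simpl; ring.
Qed.

Lemma abs_sq a : a * a = Rabs a * Rabs a.
Proof. rewrite <- Rabs_mult. rewrite Rabs_pos_eq; nra. Qed.

Lemma dist_le p q : Defs.dist p q <= Rabs (px p - px q) + Rabs (py p - py q) + Rabs (pz p - pz q).
Proof.
  unfold Defs.dist, pnorm.
  set (a := px p - px q); set (b := py p - py q); set (c := pz p - pz q).
  replace (dot (psub p q) (psub p q)) with (a*a+b*b+c*c)
    by (unfold a, b, c, dot, psub, padd, pscale; simpl; ring).
  pose proof (Rabs_pos a); pose proof (Rabs_pos b); pose proof (Rabs_pos c).
  rewrite <- (sqrt_square (Rabs a + Rabs b + Rabs c)) by lra.
  apply sqrt_le_1. nra. nra.
  rewrite (abs_sq a), (abs_sq b), (abs_sq c). nra.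
Qed.

Lemma dist_sym p q : Defs.dist p q = Defs.dist q p.
Proof.
  unfold Defs.dist, pnorm. f_equal. unfold dot, psub, padd, pscale; simpl; ring.
Qed.

Lemma cont_dist f t : cont f t -> forall e, 0 < e ->
  exists d, 0 < d /\ forall s, Rabs (s - t) < d -> Defs.dist (f s) (f t) < e.
Proof.
  intros (C1&C2&C3) e He.
  destruct (cont_eps _ _ C1 (e/3)) as (d1&D1&H1); [lra|].
  destruct (cont_eps _ _ C2 (e/3)) as (d2&D2&H2); [lra|].
  destruct (cont_eps _ _ C3 (e/3)) as (d3&D3&H3); [lra|].
  exists (Rmin d1 (Rmin d2 d3)). split.
  { apply Rmin_pos; auto. apply Rmin_pos; auto. }
  intros s Hs.
  assert (Rabs (s-t) < d1) by (eapply Rlt_le_trans; [exact Hs| apply Rmin_l]).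
  assert (Rabs (s-t) < d2) by (eapply Rlt_le_trans; [exact Hs| eapply Rle_trans; [apply Rmin_r|apply Rmin_l]]).
  assert (Rabs (s-t) < d3) by (eapply Rlt_le_trans; [exact Hs| eapply Rle_trans; [apply Rmin_r|apply Rmin_r]]).
  specialize (H1 s H); specialize (H2 s H0); specialize (H3 s H4).
  pose proof (dist_le (f s) (f t)). lra.
Qed.

Definition clamp t := Rmax 0 (Rmin 1 t).

Lemma clamp_in t : 0 <= clamp t <= 1.
Proof. unfold clamp, Rmax, Rmin; repeat destruct Rle_dec; lra. Qed.

Lemma clamp_id t : 0 <= t <= 1 -> clamp t = t.
Proof. intros; unfold clamp, Rmax, Rmin; repeat destruct Rle_dec; lra. Qed.

Lemma clamp_lip x y : Rabs (clamp x - clamp y) <= Rabs (x - y).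
Proof.
  assert (H1: x - y <= Rabs (x-y)) by apply Rle_abs.
  assert (H2: -(x-y) <= Rabs(x-y)) by (rewrite <- Rabs_Ropp; apply Rle_abs).
  unfold clamp, Rmax, Rmin; repeat destruct Rle_dec; apply Rabs_le; lra.
Qed.

Lemma clamp_cont t : continuity_pt clamp t.
Proof.
  intros e He. exists e; split; auto. intros x (_&Hx).
  simpl in *. unfold R_dist in *. eapply Rle_lt_trans; [apply clamp_lip|]; auto.
Qed.

Lemma cont_comp_clamp f (u v : R) : (forall t, 0 <= t <= 1 -> cont f t) ->
  forall t, cont (fun s => f (clamp (u + s * v))) t.
Proof.
  intros Hf t.
  assert (Ci : continuity_pt (fun s => clamp (u + s * v)) t).
  { apply (ccomp (fun s => u + s * v) clamp). cnt. apply clamp_cont. }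
  destruct (Hf _ (clamp_in (u + t * v))) as (C1&C2&C3).
  repeat split; apply (ccomp (fun s => clamp (u + s * v)) (fun r => _ (f r))); auto.
Qed.

Definition mypath (D : list arc) (Rg : pt -> Prop) (a b : pt) :=
  exists f : R -> pt, (forall t, cont f t) /\ f 0 = a /\ f 1 = b /\
    (forall t, 0 <= t <= 1 -> on_D D (f t)) /\
    (forall t, 0 < t < 1 -> in_interior Rg (f t)).

Lemma continuity_pt_ext (f g : R -> R) x : (forall y, f y = g y) -> continuity_pt f x -> continuity_pt g x.
Proof. intros H; apply (continuity_pt_locally_ext f g 1 x); [lra|auto]. Qed.

Definition pcat (f1 f2 : R -> pt) (e : pt) :=
  fun t => padd (f1 (clamp (2*t))) (padd (f2 (clamp (2*t-1))) (pscale (-1) e)).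

Lemma pcat_l f1 f2 e t : f2 0 = e -> 0 <= t <= 1/2 -> pcat f1 f2 e t = f1 (2*t).
Proof.
  intros H Ht. unfold pcat. rewrite (clamp_id (2*t)) by lra.
  replace (clamp (2*t-1)) with 0 by (unfold clamp, Rmax, Rmin; repeat destruct Rle_dec; lra).
  rewrite H. apply pt_eq; unfold padd, pscale; simpl; ring.
Qed.

Lemma pcat_r f1 f2 e t : f1 1 = e -> 1/2 <= t <= 1 -> pcat f1 f2 e t = f2 (2*t-1).
Proof.
  intros H Ht. unfold pcat. rewrite (clamp_id (2*t-1)) by lra.
  replace (clamp (2*t)) with 1 by (unfold clamp, Rmax, Rmin; repeat destruct Rle_dec; lra).
  rewrite H. apply pt_eq; unfold padd, pscale; simpl; ring.
Qed.

Lemma pcat_cont f1 f2 e : (forall t, cont f1 t) -> (forall t, cont f2 t) -> forall t, cont (pcat f1 f2 e) t.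
Proof.
  intros H1 H2 t.
  pose proof (cont_comp_clamp f1 0 2 (fun t _ => H1 t) t) as A.
  pose proof (cont_comp_clamp f2 (-1) 2 (fun t _ => H2 t) t) as B.
  destruct A as (A1&A2&A3), B as (B1&B2&B3).
  unfold pcat, cont, padd, pscale; simpl.
  repeat split; apply cplus;
  [ eapply continuity_pt_ext; [|exact A1] | apply cplus; [eapply continuity_pt_ext; [|exact B1] | apply cconst]
  | eapply continuity_pt_ext; [|exact A2] | apply cplus; [eapply continuity_pt_ext; [|exact B2] | apply cconst]
  | eapply continuity_pt_ext; [|exact A3] | apply cplus; [eapply continuity_pt_ext; [|exact B3] | apply cconst]];
  intro s; simpl; do 3 f_equal; ring.
Qed.

Lemma mypath_cat D Rg a e b : mypath D Rg a e -> mypath D Rg e b -> in_interior Rg e -> mypath D Rg a b.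
Proof.
  intros (f1&C1&F10&F11&D1&I1) (f2&C2&F20&F21&D2&I2) He.
  exists (pcat f1 f2 e). split; [apply pcat_cont; auto|].
  split. { rewrite pcat_l by (auto; lra). rewrite Rmult_0_r; auto. }
  split. { rewrite pcat_r by (auto; lra). replace (2*1-1) with 1 by ring; auto. }
  split.
  - intros t Ht. destruct (Rle_or_lt t (1/2)).
    + rewrite pcat_l by (auto; lra). apply D1; lra.
    + rewrite pcat_r by (auto; lra). apply D2; lra.
  - intros t Ht. destruct (Rle_or_lt t (1/2)) as [H|H].
    + destruct (Req_dec t (1/2)) as [->|Hn].
      * rewrite pcat_l by (auto; lra). replace (2*(1/2)) with 1 by field. rewrite F11; auto.
      * rewrite pcat_l by (auto; lra). apply I1; lra.
    + rewrite pcat_r by (auto; lra). apply I2; lra.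
Qed.

Lemma mypath_int D Rg a b : mypath D Rg a b -> int_connected D Rg a b.
Proof.
  intros (f&C&F0&F1&HD&HI). exists f. split; [auto|]. split; [auto|]. split; [auto|]. split; [auto|].
  intros t0 Ht e He. destruct (cont_dist f t0 (C t0) e He) as (d&Hd&H).
  exists d; split; auto.
Qed.

Lemma cauchy_schwarz u v : dot u v <= pnorm u * pnorm v.
Proof.
  unfold pnorm. rewrite <- sqrt_mult by apply dot_self_nonneg.
  destruct (Rle_or_lt (dot u v) 0). { pose proof (sqrt_pos (dot u u * dot v v)); lra. }
  rewrite <- (sqrt_square (dot u v)) by lra.
  apply sqrt_le_1. nra. pose proof (dot_self_nonneg u); pose proof (dot_self_nonneg v); nra.
  unfold dot.
  set (a1 := px u); set (a2 := py u); set (a3 := pz u); set (b1 := px v); set (b2 := py v); set (b3 := pz v).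
  assert (0 <= (a1*b2-a2*b1)*(a1*b2-a2*b1) + (a1*b3-a3*b1)*(a1*b3-a3*b1) + (a2*b3-a3*b2)*(a2*b3-a3*b2)) by (pose proof (Rle_0_sqr (a1*b2-a2*b1)); pose proof (Rle_0_sqr (a1*b3-a3*b1)); pose proof (Rle_0_sqr (a2*b3-a3*b2)); unfold Rsqr in *; lra).
  assert ((a1*a1+a2*a2+a3*a3)*(b1*b1+b2*b2+b3*b3) = (a1*b1+a2*b2+a3*b3)*(a1*b1+a2*b2+a3*b3) + ((a1*b2-a2*b1)*(a1*b2-a2*b1) + (a1*b3-a3*b1)*(a1*b3-a3*b1) + (a2*b3-a3*b2)*(a2*b3-a3*b2))) by ring.
  lra.
Qed.

Lemma pnorm_nonneg u : 0 <= pnorm u.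
Proof. apply sqrt_pos. Qed.

Lemma minkowski u v : pnorm (padd u v) <= pnorm u + pnorm v.
Proof.
  pose proof (cauchy_schwarz u v). pose proof (pnorm_nonneg u); pose proof (pnorm_nonneg v).
  unfold pnorm at 1. rewrite <- (sqrt_square (pnorm u + pnorm v)) by lra.
  apply sqrt_le_1. apply dot_self_nonneg. nra.
  replace (dot (padd u v) (padd u v)) with (dot u u + dot v v + 2 * dot u v)
    by (unfold dot, padd; simpl; ring).
  assert (pnorm u * pnorm u = dot u u) by (apply sqrt_sqrt, dot_self_nonneg).
  assert (pnorm v * pnorm v = dot v v) by (apply sqrt_sqrt, dot_self_nonneg).
  nra.
Qed.

Lemma dist_tri a b c : Defs.dist a c <= Defs.dist a b + Defs.dist b c.
Proof.
  unfold Defs.dist.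
  replace (psub a c) with (padd (psub a b) (psub b c))
    by (apply pt_eq; unfold psub, padd, pscale; simpl; ring).
  apply minkowski.
Qed.

Lemma interior_open Rg q : in_interior Rg q ->
  exists r, 0 < r /\ forall q', on_sphere q' -> Defs.dist q q' < r -> in_interior Rg q'.
Proof.
  intros (Hs&Hq&e&He&Hb). exists (e/2); split; [lra|].
  intros q' Hs' Hd. split; auto. split. { apply Hb; auto; lra. }
  exists (e/2); split; [lra|]. intros q'' Hs'' Hd'. apply Hb; auto.
  pose proof (dist_tri q q' q''). lra.
Qed.

Definition Dv (u h p q : pt) := dot u q * dot h p - dot u p * dot h q.
Definition ltx (n m h p q : pt) := 0 < Dv n h p q \/ (Dv n h p q = 0 /\ 0 < Dv m h p q).
Definition lexpos (a b : R) := 0 < a \/ (a = 0 /\ 0 < b).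
Definition al (u h : pt) (g : arc) := dot u (dst g) * dot h (src g) - dot u (src g) * dot h (dst g).

Lemma Dv_id u h p q r : dot h q * Dv u h p r = dot h r * Dv u h p q + dot h p * Dv u h q r.
Proof. unfold Dv; ring. Qed.

Lemma ltx_trans n m h p q r : 0 < dot h p -> 0 < dot h q -> 0 < dot h r ->
  ltx n m h p q -> ltx n m h q r -> ltx n m h p r.
Proof.
  intros Hp Hq Hr H1 H2. unfold ltx in *.
  pose proof (Dv_id n h p q r) as I1. pose proof (Dv_id m h p q r) as I2.
  destruct H1 as [A|(A&B)], H2 as [C|(C&E)].
  - left. nra.
  - left. rewrite C in I1. nra.
  - left. rewrite A in I1. nra.
  - right. rewrite A, C in I1. split. nra. nra.
Qed.

Lemma Dv_arc u h g t1 t2 :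
  Dv u h (arc_pt g t1) (arc_pt g t2) =
  / sqrt (dot (cpt g t1) (cpt g t1)) * / sqrt (dot (cpt g t2) (cpt g t2)) * al u h g * (t2 - t1).
Proof.
  rewrite !arc_pt_eq.
  generalize (/ sqrt (dot (cpt g t1) (cpt g t1))) (/ sqrt (dot (cpt g t2) (cpt g t2))); intros k1 k2.
  unfold Dv, al, dot, cpt, padd, pscale; simpl; ring.
Qed.

Lemma kpos g t : valid_arc g -> 0 <= t <= 1 -> 0 < / sqrt (dot (cpt g t) (cpt g t)).
Proof. intros; apply Rinv_0_lt_compat, sqrt_lt_R0, cpt_pos; auto. Qed.

Lemma ltx_arc n m h g t1 t2 : valid_arc g -> 0 <= t1 <= 1 -> 0 <= t2 <= 1 ->
  lexpos (al n h g) (al m h g) -> (ltx n m h (arc_pt g t1) (arc_pt g t2) <-> t1 < t2).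
Proof.
  intros Hv H1 H2 Hl. unfold ltx. rewrite !Dv_arc.
  pose proof (kpos g t1 Hv H1); pose proof (kpos g t2 Hv H2).
  set (k1 := / sqrt (dot (cpt g t1) (cpt g t1))) in *.
  set (k2 := / sqrt (dot (cpt g t2) (cpt g t2))) in *.
  assert (0 < k1 * k2) by nra.
  destruct Hl as [A|(A&B)]; split.
  - intros [C|(C&E)].
    + destruct (Rlt_or_le t1 t2); auto. assert (k1*k2*al n h g*(t2-t1) <= 0).
      { assert (0 <= k1*k2*al n h g) by nra. nra. } lra.
    + exfalso. assert (k1*k2*al n h g <> 0) by (apply Rmult_integral_contrapositive; split; lra).
      assert (Z: t2 - t1 = 0). { apply (Rmult_eq_reg_l (k1*k2*al n h g)); auto. rewrite Rmult_0_r. exact C. } rewrite Z, Rmult_0_r in E; lra.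
  - intros. left. assert (0 < k1*k2*al n h g) by nra. nra.
  - rewrite A. intros [C|(C&E)]. lra.
    destruct (Rlt_or_le t1 t2); auto. assert (0 <= k1*k2*al m h g) by nra. nra.
  - rewrite A. intros. right. split. ring. assert (0 < k1*k2*al m h g) by nra. nra.
Qed.

Lemma al_rev u h g : al u h (rev g) = - al u h g.
Proof. unfold al, rev; simpl; ring. Qed.

Definition nondeg (n m h : pt) := forall v, dot n v = 0 -> dot m v = 0 -> dot h v = 0 ->
  px v = 0 /\ py v = 0 /\ pz v = 0.

Lemma al_nonzero n m h g t : nondeg n m h -> valid_arc g -> 0 <= t <= 1 ->
  0 < dot h (arc_pt g t) -> ~ (al n h g = 0 /\ al m h g = 0).
Proof.
  intros ND Hv Ht Hp (A1&A2).
  set (a := src g) in *; set (b := dst g) in *.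
  set (la := dot h a); set (mu := dot h b).
  set (v := padd (pscale la b) (pscale (- mu) a)).
  destruct (ND v) as (E1&E2&E3).
  { rewrite <- A1. unfold v, al, la, mu, a, b, dot, padd, pscale; simpl; ring. }
  { rewrite <- A2. unfold v, al, la, mu, a, b, dot, padd, pscale; simpl; ring. }
  { unfold v, la, mu, dot, padd, pscale; simpl; ring. }
  unfold v, padd, pscale in E1, E2, E3; simpl in E1, E2, E3.
  destruct Hv as (Sa&Sb&Hne&Hanti). fold a b in Sa, Sb, Hne, Hanti.
  unfold on_sphere, dot in Sa, Sb.
  assert (Q: la*la = mu*mu).
  { replace (la*la) with (la*la*(px b*px b+py b*py b+pz b*pz b)) by (rewrite Sb; ring).
    replace (mu*mu) with (mu*mu*(px a*px a+py a*py a+pz a*pz a)) by (rewrite Sa; ring).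
    replace (la*la*(px b*px b+py b*py b+pz b*pz b)) with
      ((la*px b)*(la*px b)+(la*py b)*(la*py b)+(la*pz b)*(la*pz b)) by ring.
    replace (la*px b) with (mu*px a) by lra. replace (la*py b) with (mu*py a) by lra.
    replace (la*pz b) with (mu*pz a) by lra. ring. }
  destruct (Req_dec la 0) as [L0|L0].
  - assert (mu = 0).
    { rewrite L0 in Q. assert (mu*mu = 0) by lra. nra. }
    rewrite arc_pt_eq in Hp.
    revert Hp. generalize (/ sqrt (dot (cpt g t) (cpt g t))); intros k.
    replace (dot h (pscale k (cpt g t))) with (k * ((1-t)*la + t*mu))
      by (unfold la, mu, a, b, dot, pscale, cpt, padd; simpl; ring).
    rewrite L0, H. lra.
  - assert (Hm: (la - mu) * (la + mu) = 0) by nra.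
    apply Rmult_integral in Hm. destruct Hm as [Hm|Hm].
    + apply Hne. apply pt_eq; apply (Rmult_eq_reg_l la); auto; nra.
    + apply Hanti. unfold pscale; apply pt_eq; simpl; apply (Rmult_eq_reg_l la); auto; nra.
Qed.

Definition cross (a b : pt) := Pt (py a * pz b - pz a * py b) (pz a * px b - px a * pz b) (px a * py b - py a * px b).

Lemma nondeg_cross n h x : on_sphere n -> on_sphere h -> dot n x = 0 -> 0 < dot h x ->
  nondeg n (cross n h) h.
Proof.
  intros Sn Sh Nx Hx. set (c := cross n h).
  assert (Cpos : 0 < dot c c).
  { destruct (Rle_or_lt (dot c c) 0) as [L|L]; auto. exfalso.
    assert (Z: dot c c = 0) by (pose proof (dot_self_nonneg c); lra).
    apply dot_self_zero in Z. destruct Z as (Z1&Z2&Z3).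
    unfold on_sphere in Sn, Sh.
    assert (X1: px n = dot n h * px h).
    { transitivity (px n * dot h h - dot n h * px h + dot n h * px h). rewrite Sh; ring.
      replace (px n * dot h h - dot n h * px h) with (py h * pz c - pz h * py c)
        by (unfold c, cross, dot; simpl; ring). rewrite Z2, Z3; ring. }
    assert (X2: py n = dot n h * py h).
    { transitivity (py n * dot h h - dot n h * py h + dot n h * py h). rewrite Sh; ring.
      replace (py n * dot h h - dot n h * py h) with (pz h * px c - px h * pz c)
        by (unfold c, cross, dot; simpl; ring). rewrite Z1, Z3; ring. }
    assert (X3: pz n = dot n h * pz h).
    { transitivity (pz n * dot h h - dot n h * pz h + dot n h * pz h). rewrite Sh; ring.
      replace (pz n * dot h h - dot n h * pz h) with (px h * py c - py h * px c)
        by (unfold c, cross, dot; simpl; ring). rewrite Z1, Z2; ring. }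
    assert (E1: dot n x = dot n h * dot h x).
    { unfold dot at 1. rewrite X1, X2, X3. unfold dot; ring. }
    assert (E2: dot n n = dot n h * dot n h * dot h h).
    { unfold dot at 1. rewrite X1, X2, X3. unfold dot; ring. }
    rewrite Sn, Sh in E2. rewrite Nx in E1.
    assert (dot n h = 0). { symmetry in E1. apply Rmult_integral in E1. destruct E1; auto; lra. }
    rewrite H in E2. lra. }
  intros v A B C.
  assert (det: dot n (cross c h) = - dot c c) by (unfold c, cross, dot; simpl; ring).
  assert (I1: dot n (cross c h) * px v = dot n v * px (cross c h) + dot c v * px (cross h n) + dot h v * px (cross n c))
    by (unfold cross, dot; simpl; ring).
  assert (I2: dot n (cross c h) * py v = dot n v * py (cross c h) + dot c v * py (cross h n) + dot h v * py (cross n c))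
    by (unfold cross, dot; simpl; ring).
  assert (I3: dot n (cross c h) * pz v = dot n v * pz (cross c h) + dot c v * pz (cross h n) + dot h v * pz (cross n c))
    by (unfold cross, dot; simpl; ring).
  rewrite A, B, C, det in *.
  repeat split.
  - apply (Rmult_eq_reg_l (- dot c c)); [|lra]. rewrite I1; ring.
  - apply (Rmult_eq_reg_l (- dot c c)); [|lra]. rewrite I2; ring.
  - apply (Rmult_eq_reg_l (- dot c c)); [|lra]. rewrite I3; ring.
Qed.

Lemma nondeg_neg n m h : nondeg n m h -> nondeg (pscale (-1) n) (pscale (-1) m) h.
Proof.
  intros ND v A B C. apply ND; auto.
  - replace (dot n v) with (- dot (pscale (-1) n) v) by (unfold dot, pscale; simpl; ring). lra.
  - replace (dot m v) with (- dot (pscale (-1) m) v) by (unfold dot, pscale; simpl; ring). lra.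
Qed.

Definition Hyp (Rg : pt -> Prop) (D : list arc) (n m h : pt) :=
  (forall p, Rg p -> 0 < dot h p) /\ (forall p, in_closure Rg p -> Rg p) /\ SD D /\ nondeg n m h.

Definition InD (D : list arc) g := In g D \/ In (rev g) D.
Definition state D Rg p := in_interior Rg p /\ exists g, InD D g /\ in_relint g p.
Definition counts Rg n m h g p := exists q, on_arc g q /\ in_interior Rg q /\ ltx n m h p q.
Definition goal D Rg n m h p :=
  exists y g, In g D /\ thrusts g Rg y /\ ltx n m h p y /\ mypath D Rg y p.

Lemma InD_valid D g : SD D -> InD D g -> valid_arc g.
Proof.
  intros (_&HV&_) [H|H]; auto. rewrite <- (rev_rev g). apply valid_rev; auto.
Qed.

Lemma InD_rev D g : InD D g -> InD D (rev g).
Proof. unfold InD; rewrite rev_rev; tauto. Qed.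

Lemma InD_gD D g : InD D g -> exists gD, In gD D /\ forall q, (on_arc gD q <-> on_arc g q).
Proof.
  intros [H|H].
  - exists g; split; auto; tauto.
  - exists (rev g); split; auto. intro q; split; [apply on_arc_rev|apply on_arc_rev'].
Qed.

Lemma InD_onD D g q : InD D g -> on_arc g q -> on_D D q.
Proof. intros H Hq. destruct (InD_gD D g H) as (gD&HgD&E). exists gD; split; auto; apply E; auto. Qed.

Lemma InD_thrust D Rg g y : InD D g -> thrusts g Rg y -> exists g', In g' D /\ thrusts g' Rg y.
Proof.
  intros H (A&B&q&C&E). destruct (InD_gD D g H) as (gD&HgD&Eq).
  exists gD; split; auto. split. apply Eq; auto. split; auto. exists q; split; auto. apply Eq; auto.
Qed.

Lemma InD_block D g : SD D -> InD D g -> exists c, In c D /\ in_relint c (dst g).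
Proof.
  intros HS [H|H]; destruct HS as (_&_&_&B).
  - destruct (B g H) as (_&X); exact X.
  - destruct (B (rev g) H) as (X&_); exact X.
Qed.

Lemma seg_path D Rg g s1 s2 : valid_arc g -> InD D g -> 0 <= s1 <= 1 -> 0 <= s2 <= 1 ->
  (forall tau, 0 < tau < 1 -> in_interior Rg (arc_pt g (s1 + tau * (s2 - s1)))) ->
  mypath D Rg (arc_pt g s1) (arc_pt g s2).
Proof.
  intros Hv HD H1 H2 HI.
  exists (fun tau => arc_pt g (clamp (s1 + tau * (s2 - s1)))).
  split. { apply cont_comp_clamp. intros; apply arc_cont; auto. }
  split. { rewrite clamp_id; [f_equal; ring| lra]. }
  split. { rewrite clamp_id; [f_equal; ring| lra]. }
  split.
  - intros t Ht. eapply InD_onD; eauto. exists (clamp (s1 + t * (s2 - s1))). split; auto. apply clamp_in.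
  - intros t Ht. rewrite clamp_id; auto.
    assert (s1 + t*(s2-s1) = (1-t)*s1 + t*s2) by ring. split; nra.
Qed.

Lemma orient Rg D n m h p : Hyp Rg D n m h -> state D Rg p ->
  exists g t0, InD D g /\ valid_arc g /\ 0 < t0 < 1 /\ p = arc_pt g t0 /\ lexpos (al n h g) (al m h g).
Proof.
  intros (HR&Hcl&HS&ND) (HI&g&HD&t0&Ht0&Ep).
  pose proof (InD_valid D g HS HD) as Hv.
  assert (Hp: 0 < dot h (arc_pt g t0)) by (rewrite <- Ep; apply HR; apply HI).
  pose proof (al_nonzero n m h g t0 ND Hv (conj (Rlt_le _ _ (proj1 Ht0)) (Rlt_le _ _ (proj2 Ht0))) Hp) as NZ.
  destruct (Rtotal_order (al n h g) 0) as [A|[A|A]];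
  [| destruct (Rtotal_order (al m h g) 0) as [B|[B|B]] |].
  - exists (rev g), (1 - t0). split; [apply InD_rev; auto|]. split; [apply valid_rev; auto|].
    split; [lra|]. split; [rewrite arc_pt_rev, Ep; f_equal; ring|].
    left. rewrite al_rev. lra.
  - exists (rev g), (1 - t0). split; [apply InD_rev; auto|]. split; [apply valid_rev; auto|].
    split; [lra|]. split; [rewrite arc_pt_rev, Ep; f_equal; ring|].
    right. rewrite !al_rev. lra.
  - exfalso; tauto.
  - exists g, t0. split; [auto|]. split; [auto|]. split; [lra|]. split; [auto|]. right; lra.
  - exists g, t0. split; [auto|]. split; [auto|]. split; [lra|]. split; [auto|]. left; lra.
Qed.

Lemma step Rg D n m h p : Hyp Rg D n m h -> state D Rg p ->
  goal D Rg n m h p \/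
  exists e gD, state D Rg e /\ ltx n m h p e /\ mypath D Rg e p /\ In gD D /\
    counts Rg n m h gD p /\ ~ counts Rg n m h gD e /\
    (forall g', counts Rg n m h g' e -> counts Rg n m h g' p).
Proof.
  intros HH Hst. pose proof HH as (HR&Hcl&HS&ND).
  destruct (orient Rg D n m h p HH Hst) as (g&t0&HD&Hv&Ht0&Ep&Hl).
  destruct Hst as (HIp&_).
  assert (near : forall s, 0 <= s <= 1 -> forall e, 0 < e -> exists d, 0 < d /\
            forall u, Rabs (u - s) < d -> Defs.dist (arc_pt g s) (arc_pt g u) < e).
  { intros s Hs e He. destruct (cont_dist _ _ (arc_cont g s Hv Hs) e He) as (d&Hd&Hu).
    exists d; split; auto. intros u Hus; rewrite dist_sym; auto. }
  assert (openarc : forall s, 0 <= s <= 1 -> in_interior Rg (arc_pt g s) -> exists d, 0 < d /\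
            forall u, 0 <= u <= 1 -> Rabs (u - s) < d -> in_interior Rg (arc_pt g u)).
  { intros s Hs I. destruct (interior_open Rg _ I) as (r&Hr&Hb).
    destruct (near s Hs r Hr) as (d&Hd&Hu). exists d; split; auto.
    intros u Hu1 Hu2. apply Hb; auto. apply arc_sphere; auto. }
  assert (Hlt : forall t1 t2, 0 <= t1 <= 1 -> 0 <= t2 <= 1 ->
            (ltx n m h (arc_pt g t1) (arc_pt g t2) <-> t1 < t2)).
  { intros; apply ltx_arc; auto. }
  assert (Hdp : 0 < dot h p) by (apply HR, HIp).
  destruct (classic (forall u, t0 <= u <= 1 -> in_interior Rg (arc_pt g u))) as [All|NAll].
  - right.
    destruct (InD_block D g HS HD) as (c&Hc&Hrel).
    destruct (InD_gD D g HD) as (gD&HgD&Eq).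
    assert (He1 : arc_pt g 1 = dst g) by (apply arc_pt_1; destruct Hv as (_&X&_); exact X).
    assert (HIe : in_interior Rg (arc_pt g 1)) by (apply All; lra).
    exists (arc_pt g 1), gD.
    split. { split; auto. exists c; split. left; auto. rewrite He1; auto. }
    split. { rewrite Ep; apply Hlt; lra. }
    split. { rewrite Ep. apply seg_path; auto; try lra.
             intros tau Ht. apply All. split; nra. }
    split; auto.
    split. { exists (arc_pt g 1). split. apply Eq. exists 1; split; [lra|auto]. split; auto.
             rewrite Ep; apply Hlt; lra. }
    split. { intros (q&Hq&HIq&L). apply Eq in Hq. destruct Hq as (t&Ht&->).
             apply Hlt in L; lra. }
    intros g' (q&Hq&HIq&L). exists q. split; auto. split; auto.
    apply (ltx_trans n m h p (arc_pt g 1) q); auto.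
    apply HR, HIe. apply HR, HIq. rewrite Ep; apply Hlt; lra.
  - left.
    set (E := fun s => t0 <= s <= 1 /\ forall u, t0 <= u <= s -> in_interior Rg (arc_pt g u)).
    assert (Hb : bound E) by (exists 1; intros s (Hs&_); lra).
    assert (Hne : exists s, E s).
    { exists t0. split; [lra|]. intros u Hu. replace u with t0 by lra. rewrite <- Ep; auto. }
    destruct (completeness E Hb Hne) as (ts&Hub&Hlub).
    assert (F0a : t0 <= ts). { apply Hub. destruct Hne as (s0&Hs0). split; [lra|].
      intros u Hu. replace u with t0 by lra. rewrite <- Ep; auto. }
    assert (F0b : ts <= 1). { apply Hlub. intros s (Hs&_); lra. }
    assert (F1 : forall u, t0 <= u < ts -> in_interior Rg (arc_pt g u)).
    { intros u Hu. destruct (classic (exists s, E s /\ u < s)) as [(s&(Hs1&Hs2)&Hus)|NE].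
      - apply Hs2; lra.
      - exfalso. assert (ts <= u).
        { apply Hlub. intros s Hs. destruct (Rle_or_lt s u); auto. exfalso; apply NE; eauto. }
        lra. }
    assert (F2 : t0 < ts).
    { destruct (openarc t0 ltac:(lra) ltac:(rewrite <- Ep; auto)) as (d&Hd&Hu).
      set (s' := Rmin (t0 + d/2) 1).
      assert (Hs' : t0 < s' <= 1) by (unfold s', Rmin; destruct Rle_dec; lra).
      assert (E s').
      { split; [lra|]. intros u Hu'. apply Hu; [lra|].
        assert (s' <= t0 + d/2) by apply Rmin_l. apply Rabs_def1; lra. }
      assert (s' <= ts) by (apply Hub; auto). lra. }
    assert (F3 : ~ in_interior Rg (arc_pt g ts)).
    { intro I. destruct (openarc ts ltac:(lra) I) as (d&Hd&Hu).
      destruct (Rlt_or_le ts 1) as [Lt|Ge].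
      - set (s' := Rmin (ts + d/2) 1).
        assert (Hs' : ts < s' <= 1) by (unfold s', Rmin; destruct Rle_dec; lra).
        assert (E s').
        { split; [lra|]. intros u Hu'. destruct (Rlt_or_le u ts).
          - apply F1; lra.
          - apply Hu; [lra|]. assert (s' <= ts + d/2) by apply Rmin_l. apply Rabs_def1; lra. }
        assert (s' <= ts) by (apply Hub; auto). lra.
      - apply NAll. intros u Hu'. destruct (Rlt_or_le u ts).
        + apply F1; lra.
        + replace u with ts by lra. auto. }
    assert (F4 : in_closure Rg (arc_pt g ts)).
    { split. apply arc_sphere; auto; lra.
      intros e He. destruct (near ts ltac:(lra) e He) as (d&Hd&Hu).
      set (u := Rmax t0 (ts - d/2)).
      assert (Hu1 : t0 <= u < ts) by (unfold u, Rmax; destruct Rle_dec; lra).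
      exists (arc_pt g u). split. apply F1; auto.
      apply Hu. assert (ts - d/2 <= u) by apply Rmax_r. apply Rabs_def1; lra. }
    assert (Th : thrusts g Rg (arc_pt g ts)).
    { split. exists ts; split; [lra|auto]. split. split; auto.
      exists p. split. exists t0; split; [lra|auto]. auto. }
    destruct (InD_thrust D Rg g _ HD Th) as (g'&Hg'&Th').
    exists (arc_pt g ts), g'. split; auto. split; auto.
    split. { rewrite Ep; apply Hlt; lra. }
    rewrite Ep. apply seg_path; auto; try lra.
    intros tau Ht. apply F1. split; nra.
Qed.

Definition arc_dec : forall x y : arc, {x = y} + {x <> y} :=
  fun x y => excluded_middle_informative (x = y).

Lemma walk Rg D n m h : Hyp Rg D n m h -> forall k L p, (length L <= k)%nat -> state D Rg p ->
  (forall g, In g D -> counts Rg n m h g p -> In g L) -> goal D Rg n m h p.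
Proof.
  intros HH k. pose proof HH as (HR&Hcl&HS&ND). induction k as [|k IH]; intros L p HL Hst Hcov.
  - destruct (step Rg D n m h p HH Hst) as [G|(e&gD&_&_&_&HgD&Cp&_)]; auto.
    exfalso. pose proof (Hcov gD HgD Cp). destruct L; simpl in *; [auto|lia].
  - destruct (step Rg D n m h p HH Hst) as [G|(e&gD&Ste&Lpe&Pep&HgD&Cp&NCe&Mon)]; auto.
    pose proof (Hcov gD HgD Cp) as InL.
    pose proof (remove_length_lt arc_dec L gD InL).
    destruct (IH (remove arc_dec gD L) e ltac:(lia) Ste) as (y&g&Hg&Th&Ley&Pye).
    { intros g' Hg' Cg'. apply in_in_remove.
      - intro E; subst; contradiction.
      - apply Hcov; auto. }
    exists y, g. split; auto. split; auto. split.
    + apply (ltx_trans n m h p e y); auto.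
      apply HR, Hst. apply HR, Ste. apply HR, Hcl. destruct Th as (_&(X&_)&_). exact X.
    + apply (mypath_cat D Rg y e p); auto. apply Ste.
Qed.

Lemma Dv_neg u h p q : Dv (pscale (-1) u) h p q = - Dv u h p q.
Proof. unfold Dv, dot, pscale; simpl; ring. Qed.

Lemma ltx_nonneg n m h x y : ltx n m h x y -> 0 <= Dv n h x y.
Proof. intros [A|(A&_)]; lra. Qed.

Theorem mainTheorem19 :
  forall (Rg : pt -> Prop) (D : list arc) (x n : pt),
    spherical_polygon Rg -> in_open_hemisphere Rg -> SD D ->
    on_D D x -> in_interior Rg x ->
    (* the great circle gamma = {p on sphere | dot n p = 0}, through x *)
    on_sphere n -> dot n x = 0 ->
    exists (y z : pt) (g h : arc),
      In g D /\ In h D /\ thrusts g Rg y /\ thrusts h Rg z /\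
      y <> z /\ 0 <= dot n y /\ dot n z <= 0 /\
      int_connected D Rg y x /\ int_connected D Rg z x.
Proof.
  intros Rg D x n HP (h&Sh&HR) HS HonD HIx Sn Nx.
  destruct HP as (_&Hcl&_&_).
  assert (Hx : 0 < dot h x) by (apply HR, HIx).
  pose proof (nondeg_cross n h x Sn Sh Nx Hx) as ND.
  set (m := cross n h) in *.
  assert (H1 : Hyp Rg D n m h) by exact (conj HR (conj Hcl (conj HS ND))).
  assert (H2 : Hyp Rg D (pscale (-1) n) (pscale (-1) m) h)
    by exact (conj HR (conj Hcl (conj HS (nondeg_neg _ _ _ ND)))).
  assert (St : state D Rg x).
  { split; auto. destruct HonD as (g&Hg&t&Ht&Ex).
    destruct HS as (_&HV&_&HB). destruct (HV g Hg) as (Sa&Sb&_).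
    destruct (Rtotal_order t 0) as [L|[L|L]]; [lra| |].
    - subst t. rewrite arc_pt_0 in Ex by auto. subst x.
      destruct (HB g Hg) as ((c&Hc&Hr)&_). exists c; split; [left; auto|auto].
    - destruct (Rtotal_order t 1) as [L1|[L1|L1]]; [|subst t|lra].
      + exists g; split; [left; auto|]. exists t; split; [lra|auto].
      + rewrite arc_pt_1 in Ex by auto. subst x.
        destruct (HB g Hg) as (_&(c&Hc&Hr)). exists c; split; [left; auto|auto]. }
  destruct (walk Rg D n m h H1 (length D) D x (le_n _) St (fun g Hg _ => Hg))
    as (y&g1&Hg1&Th1&L1&P1).
  destruct (walk Rg D (pscale (-1) n) (pscale (-1) m) h H2 (length D) D x (le_n _) St (fun g Hg _ => Hg))
    as (z&g2&Hg2&Th2&L2&P2).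
  exists y, z, g1, g2.
  assert (Ey : Dv n h x y = dot n y * dot h x) by (unfold Dv; rewrite Nx; ring).
  assert (Ez : Dv (pscale (-1) n) h x z = - (dot n z * dot h x)) by (rewrite Dv_neg; unfold Dv; rewrite Nx; ring).
  split; auto. split; auto. split; auto. split; auto.
  split.
  { intro E. subst z. unfold ltx in L1, L2. rewrite !Dv_neg in L2. lra. }
  split.
  { pose proof (ltx_nonneg _ _ _ _ _ L1). rewrite Ey in H.
    destruct (Rle_or_lt 0 (dot n y)); auto. nra. }
  split.
  { pose proof (ltx_nonneg _ _ _ _ _ L2). rewrite Ez in H.
    destruct (Rle_or_lt (dot n z) 0); auto. nra. }
  split; apply mypath_int; auto.
Qed.
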